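(* Let $\mathcal{X}=\mathbb{R}^{d_\mathcal{X}}$, $\Theta=\mathbb{R}^{d_\Theta}$, $\beta>0$, observations $x^o_1,\dots,x^o_n$, and Gaussian prior $\pi(\theta)\propto\mathcal{N}(\theta;\mu,\Sigma)$ with $\Sigma$ positive definite. Suppose: (A1) $w:\mathcal{X}\to\mathbb{R}_+$ is twice continuously differentiable with $\sup_xw(x)<\infty$ and $\sup_x\|\nabla_xw(x)\|_2<\infty$; (A3) $q(x\mid\theta)\propto\exp(T(x)^\top\theta+b(x))$ with $T:\mathcal{X}\to\mathbb{R}^{d_\Theta}$, $b:\mathcal{X}\to\mathbb{R}$ twice differentiable and $q(\cdot\mid\theta)$ a probability density for each $\theta$; (A5) there exist $C,C'<\infty$ such that for all $x\in\mathcal{X}$, $$\max\Big\{\big(\|\nabla_xT(x)\|_F\|\nabla_xb(x)\|_2\big)^{1/2},\ \|\nabla_x^2T(x)\|_F^{1/2},\ \|\nabla_xT(x)\|_F\Big\}\le C\,w(x)^{-1},\qquad \|\nabla_xT(x)\|_F\le C'\|\nabla_xw(x)^2\|_2^{-1}.$$ Fix $j\in\{1,\dots,n\}$ and for $x_j^c\in\mathcal{X}$ let $x^c_{1:n}$ be the dataset obtained from $x^o_{1:n}$ by replacing $x_j^o$ with $x_j^c$. Then $$\sup_{x_j^c\in\mathbb{R}^{d_\mathcal{X}}}\mathrm{KL}\Big(\pi_{\mathrm{NSM}}(\cdot\mid x^o_{1:n})\,\Big\|\,\pi_{\mathrm{NSM}}(\cdot\mid x^c_{1:n})\Big)<\i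nfty.$$
   Context: $\nabla_xT(x)\in\mathbb{R}^{d_\Theta\times d_\mathcal{X}}$ has entries $\partial T_k/\partial x_j$; $\nabla_x^2T(x)$ is the array of all second derivatives $\partial^2T_k/\partial x_j\partial x_l$; $\|\cdot\|_F$ is the Frobenius (square root of sum of squared entries) norm; $\nabla_xw(x)^2$ is the gradient of $x\mapsto w(x)^2$; $1/0=\infty$. For any dataset $y_{1:n}$, the NSM-Bayes posterior is $\pi_{\mathrm{NSM}}(\theta\mid y_{1:n})\propto\exp(-\beta n\mathcal{L}_{\mathrm{NSM}}(\theta;y_{1:n}))\pi(\theta)$ with $$\mathcal{L}_{\mathrm{NSM}}(\theta;y_{1:n})=\frac1n\sum_{i=1}^n\Big[w(y_i)^2\|\nabla_x\log q(y_i\mid\theta)\|_2^2+2(\nabla_xw(y_i)^2)^\top\nabla_x\log q(y_i\mid\theta)+2w(y_i)^2\mathrm{Tr}\,\nabla_x^2\log q(y_i\mid\theta)\Big].$$ Under (A3) and the Gaussian prior this posterior is Gaussian, $\mathcal{N}(\theta;\mu_n,\Sigma_n)$, with $\Sigma_n^{-1}=\Sigma^{-1}+2\beta\sum_i w(y_i)^2\nabla_xT(y_i)\nabla_xT(y_i)^\top$ and $\mu_n=\Sigma_n(\Sigma^{-1}\mu-2\beta\sum_i[w(y_i)^2\nabla_xT(y_i)\nabla_xb(y_i)+d(y_i)])$, where $d(y)_k=\sum_{j}\partial_{x_j}(w(y)^2\partial T_k(y)/\partial x_j)$. *)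

(* Defs.v *)
From mathcomp Require Import all_boot all_order all_algebra.
From mathcomp Require Import all_classical all_reals all_analysis.
Import Order.TTheory GRing.Theory Num.Theory.
Import numFieldTopology.Exports numFieldNormedType.Exports.

Set Implicit Arguments.
Unset Strict Implicit.
Unset Printing Implicit Defensive.

Local Open Scope ring_scope.

Section NSM.
Variable R : realType.

(* ---------- Lebesgue integration over R^d ('rV[R]_d) ----------
   There is no d-dimensional Lebesgue measure in the library; the integral
   over R^d is the iterated one-dimensional Lebesgue integral (Fubini). *)
Fixpoint iint (d : nat) : ('rV[R]_d -> \bar R) -> \bar R :=
 match d with
 | 0 => fun f => f 0
 | d'.+1 => fun f : 'rV[R]_d'.+1 -> \bar R =>
    (\int[@lebesgue_measure R]_t
       @iint d' (fun v : 'rV[R]_d' => f (row_mx (const_mx (t : R) : 'rV[R]_1) v)))%E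
 end.

Definition partial (d : nat) (j : 'I_d) (f : 'rV[R]_d -> R) (x : 'rV[R]_d) : R :=
  'D_(delta_mx 0 j) f x.

Definition grad_norm (d : nat) (f : 'rV[R]_d -> R) (x : 'rV[R]_d) : R :=
  Num.sqrt (\sum_(j < d) partial j f x ^+ 2).

Definition laplacian (d : nat) (f : 'rV[R]_d -> R) (x : 'rV[R]_d) : R :=
  \sum_(j < d) partial j (partial j f) x.

Definition twice_diff (d : nat) (f : 'rV[R]_d -> R) : Prop :=
  (forall x, differentiable f x) /\
  (forall (j : 'I_d) x, differentiable (partial j f) x).

Definition C2 (d : nat) (f : 'rV[R]_d -> R) : Prop :=
  twice_diff f /\
  (forall (j l : 'I_d), continuous (fun x : 'rV[R]_d => partial l (partial j f) x)).

Definition Tcomp (dX dT : nat) (T : 'rV[R]_dX -> 'rV[R]_dT) (k : 'I_dT)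
  : 'rV[R]_dX -> R := fun x => T x 0 k.

Definition frob_gradT (dX dT : nat) (T : 'rV[R]_dX -> 'rV[R]_dT) (x : 'rV[R]_dX) : R :=
  Num.sqrt (\sum_(k < dT) \sum_(l < dX) partial l (Tcomp T k) x ^+ 2).

Definition frob_hessT (dX dT : nat) (T : 'rV[R]_dX -> 'rV[R]_dT) (x : 'rV[R]_dX) : R :=
  Num.sqrt (\sum_(k < dT) \sum_(l < dX) \sum_(m < dX)
              partial m (partial l (Tcomp T k)) x ^+ 2).

Definition natpar (dX dT : nat) (T : 'rV[R]_dX -> 'rV[R]_dT) (b : 'rV[R]_dX -> R)
  (theta : 'rV[R]_dT) (x : 'rV[R]_dX) : R :=
  \sum_(k < dT) T x 0 k * theta 0 k + b x.

Definition qnorm (dX dT : nat) (T : 'rV[R]_dX -> 'rV[R]_dT) (b : 'rV[R]_dX -> R)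
  (theta : 'rV[R]_dT) : \bar R :=
  iint (fun x => (expR (natpar T b theta x))%:E).

Definition logq (dX dT : nat) (T : 'rV[R]_dX -> 'rV[R]_dT) (b : 'rV[R]_dX -> R)
  (theta : 'rV[R]_dT) (x : 'rV[R]_dX) : R :=
  natpar T b theta x - ln (fine (qnorm T b theta)).

Definition nsm_term (dX dT : nat) (w : 'rV[R]_dX -> R)
  (T : 'rV[R]_dX -> 'rV[R]_dT) (b : 'rV[R]_dX -> R)
  (theta : 'rV[R]_dT) (y : 'rV[R]_dX) : R :=
  let lq := logq T b theta in
  let w2 := fun x => w x ^+ 2 in
  w y ^+ 2 * grad_norm lq y ^+ 2
  + 2 * (\sum_(j < dX) partial j w2 y * partial j lq y)
  + 2 * w y ^+ 2 * laplacian lq y.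

Definition L_NSM (n dX dT : nat) (w : 'rV[R]_dX -> R)
  (T : 'rV[R]_dX -> 'rV[R]_dT) (b : 'rV[R]_dX -> R)
  (theta : 'rV[R]_dT) (ys : 'I_n -> 'rV[R]_dX) : R :=
  n%:R^-1 * \sum_(i < n) nsm_term w T b theta (ys i).

Definition posdef (d : nat) (S : 'M[R]_d) : Prop :=
  S^T = S /\ (forall v : 'rV[R]_d, v != 0 -> 0 < (v *m S *m v^T) 0 0).

Definition gauss_pdf (d : nat) (mu : 'rV[R]_d) (S : 'M[R]_d) (theta : 'rV[R]_d) : R :=
  (Num.sqrt ((2 * pi) ^+ d * \det S))^-1 *
  expR (- 2^-1 * ((theta - mu) *m invmx S *m (theta - mu)^T) 0 0).

Definition post_unnorm (n dX dT : nat) (beta : R) (mu : 'rV[R]_dT) (S : 'M[R]_dT)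
  (w : 'rV[R]_dX -> R) (T : 'rV[R]_dX -> 'rV[R]_dT) (b : 'rV[R]_dX -> R)
  (ys : 'I_n -> 'rV[R]_dX) (theta : 'rV[R]_dT) : R :=
  expR (- (beta * n%:R * L_NSM w T b theta ys)) * gauss_pdf mu S theta.

Definition pi_NSM (n dX dT : nat) (beta : R) (mu : 'rV[R]_dT) (S : 'M[R]_dT)
  (w : 'rV[R]_dX -> R) (T : 'rV[R]_dX -> 'rV[R]_dT) (b : 'rV[R]_dX -> R)
  (ys : 'I_n -> 'rV[R]_dX) (theta : 'rV[R]_dT) : R :=
  post_unnorm beta mu S w T b ys theta /
  fine (iint (fun th => (post_unnorm beta mu S w T b ys th)%:E)).

Definition KL (d : nat) (p q : 'rV[R]_d -> R) : \bar R :=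
  iint (fun th => (p th * ln (p th / q th))%:E).

Definition replace_at (n dX : nat) (xs : 'I_n -> 'rV[R]_dX) (j : 'I_n)
  (xc : 'rV[R]_dX) : 'I_n -> 'rV[R]_dX :=
  fun i => if i == j then xc else xs i.

End NSM.

(* Main.v *)
Require Import Defs.
From mathcomp Require Import all_boot all_order all_algebra.
From mathcomp Require Import all_classical all_reals all_analysis.
From mathcomp Require Import ring lra.
Import Order.TTheory GRing.Theory Num.Theory.
Import numFieldTopology.Exports numFieldNormedType.Exports.
Local Open Scope ring_scope.

Section Sec_H1.
Local Open Scope ring_scope.
Local Open Scope classical_set_scope.

Lemma int_le (R : realType) (f g : R -> \bar R) :
  (forall x, f x <= g x)%E ->
  (\int[@lebesgue_measure R]_x f x <= \int[@lebesgue_measure R]_x g x)%E.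
Proof.
move=> fg.
have fg' : {in [set: R], forall x, ((f \_ [set: R]) x <= (g \_ [set: R]) x)%E}.
  by move=> x _; rewrite /patch mem_set /=; [exact: fg|].
rewrite /integral; apply: leeB.
- apply: le_ereal_sup => _ [h /= hf <-]; exists h => //= x.
  exact: (le_trans (hf x) (funepos_le fg' (in_setT x))).
- apply: le_ereal_sup => _ [h /= hf <-]; exists h => //= x.
  exact: (le_trans (hf x) (funeneg_le fg' (in_setT x))).
Qed.

Lemma iint_le (R : realType) (d : nat) (f g : 'rV[R]_d -> \bar R) :
  (forall x, f x <= g x)%E -> (iint f <= iint g)%E.
Proof.
elim: d f g => [|d IH] f g fg /=; first exact: fg.
apply: int_le => t; apply: IH => v; exact: fg.
Qed.

Lemma row_mx_const0 (R : realType) d (t : R) (v : 'rV[R]_d) :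
  (row_mx (const_mx t : 'rV[R]_1) v) 0 ord0 = t.
Proof.
have -> : (ord0 : 'I_(1 + d)) = lshift d (ord0 : 'I_1) by apply: val_inj.
by rewrite row_mxEl mxE.
Qed.

Lemma row_mx_constS (R : realType) d (t : R) (v : 'rV[R]_d) (i : 'I_d) :
  (row_mx (const_mx t : 'rV[R]_1) v) 0 (lift ord0 i) = v 0 i.
Proof.
have -> : (lift ord0 i : 'I_(1 + d)) = rshift 1 i by apply: val_inj.
by rewrite row_mxEr.
Qed.

Lemma iint_prod (R : realType) (d : nat) (phi : R -> R) (c : R) :
  (forall t, 0 <= phi t) -> measurable_fun [set: R] phi ->
  (\int[@lebesgue_measure R]_t (phi t)%:E = 1)%E -> 0 <= c ->
  iint (fun v : 'rV[R]_d => (c * \prod_(k < d) phi (v 0 k))%:E) = c%:E.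
Proof.
move=> phi0 mphi iphi.
elim: d c => [|d IH] c c0 /=; first by rewrite big_ord0 mulr1.
rewrite (_ : (fun t => _) = (fun t => (c * phi t)%:E)); last first.
  apply/funext => t.
  rewrite (_ : (fun v => _) = (fun v : 'rV[R]_d =>
     ((c * phi t) * \prod_(k < d) phi (v 0 k))%:E)); last first.
    apply/funext => v; rewrite big_ord_recl row_mx_const0 mulrA.
    by congr (_ * _ * _)%:E; apply: eq_bigr => i _; rewrite row_mx_constS.
  by rewrite IH // mulr_ge0.
rewrite (_ : (fun t => (c * phi t)%:E) = (fun t => c%:E * (phi t)%:E)%E);
  last by apply/funext => t; rewrite EFinM.
rewrite ge0_integralZl_EFin //.
- by rewrite iphi mule1.
- by move=> x _; rewrite lee_fin.
- exact/measurable_realfun.measurable_EFinP.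
Qed.

End Sec_H1.

Section Sec_H2.
Local Open Scope ring_scope.

Lemma partial_lin (R : realType) (d m : nat) (F : 'I_m -> 'rV[R]_d -> R)
  (g : 'rV[R]_d -> R) (a : 'I_m -> R) (c : R) (j : 'I_d) (y : 'rV[R]_d) :
  (forall k, differentiable (F k) y) -> differentiable g y ->
  partial j (fun x => \sum_(k < m) a k * F k x + g x - c) y =
  \sum_(k < m) a k * partial j (F k) y + partial j g y.
Proof.
move=> dF dg; rewrite /partial.
have -> : (fun x => \sum_(k < m) a k * F k x + g x - c) =
   ((\sum_(k < m) (a k \*: F k)) + g) - cst c.
  by apply/funext => x /=; rewrite fct_sumE.
have dS : derivable (\sum_(k < m) (a k \*: F k)) y (delta_mx 0 j).
  apply: derivable_sum => k. apply: derivableZ. exact: diff_derivable.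
have dg' : derivable g y (delta_mx 0 j) by exact: diff_derivable.
rewrite (deriveB (derivableD dS dg') (derivable_cst c _ _)).
rewrite derive_cst subr0 (deriveD dS dg').
rewrite derive_sum; last first.
  by move=> k; apply: derivableZ; exact: diff_derivable.
congr (_ + _); apply: eq_bigr => k _; rewrite deriveZ //.
exact: diff_derivable.
Qed.

End Sec_H2.

Section Sec_H3.
Set Implicit Arguments.
Unset Strict Implicit.
Local Open Scope ring_scope.

Definition Fq (R : realType) (dX dT : nat) (W : R) (D : 'I_dX -> 'I_dT -> R)
  (Db p : 'I_dX -> R) (H : 'I_dX -> 'I_dT -> R) (Hb : 'I_dX -> R)
  (th : 'I_dT -> R) : R :=
  W * (\sum_(j < dX) (\sum_(k < dT) th k * D j k + Db j) ^+ 2)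
  + 2 * (\sum_(j < dX) p j * (\sum_(k < dT) th k * D j k + Db j))
  + 2 * W * (\sum_(j < dX) (\sum_(k < dT) th k * H j k + Hb j)).

Lemma Fq_diff (R : realType) (dX dT : nat) (W : R) (D : 'I_dX -> 'I_dT -> R)
  (Db p : 'I_dX -> R) (H : 'I_dX -> 'I_dT -> R) (Hb : 'I_dX -> R)
  (th : 'I_dT -> R) :
  Fq W D Db p H Hb th - Fq W D Db p H Hb (fun _ => 0) =
  W * (\sum_(j < dX) (\sum_(k < dT) th k * D j k) ^+ 2)
  + \sum_(j < dX) \sum_(k < dT) th k *
      (2 * W * Db j * D j k + 2 * p j * D j k + 2 * W * H j k).
Proof.
rewrite /Fq.
have z1 : forall j, \sum_(k < dT) (0:R) * D j k = 0.
  by move=> j; rewrite big1 // => k _; rewrite mul0r.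
have z2 : forall j, \sum_(k < dT) (0:R) * H j k = 0.
  by move=> j; rewrite big1 // => k _; rewrite mul0r.
rewrite !mulr_sumr -!big_split /= -sumrB; apply: eq_bigr => j _.
rewrite z1 z2 !add0r.
set L := \sum_(k < dT) th k * D j k.
have -> : \sum_(k < dT) th k * (2 * W * Db j * D j k + 2 * p j * D j k + 2 * W * H j k)
   = 2 * W * Db j * L + 2 * p j * L + 2 * W * (\sum_(k < dT) th k * H j k).
  rewrite /L !mulr_sumr -!big_split /=; apply: eq_bigr => k _; ring.
ring.
Qed.

End Sec_H3.

Section Sec_H4.
Set Implicit Arguments.
Unset Strict Implicit.
Local Open Scope ring_scope.

Section S.
Variables (R : realType) (dX dT : nat) (w : 'rV[R]_dX -> R)
  (T : 'rV[R]_dX -> 'rV[R]_dT) (b : 'rV[R]_dX -> R).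
Hypothesis dTk : forall k, twice_diff (Tcomp T k).
Hypothesis db : twice_diff b.

Lemma dlogq (th : 'rV[R]_dT) (j : 'I_dX) :
  partial j (logq T b th) =
  (fun x => \sum_(k < dT) th 0 k * partial j (Tcomp T k) x + partial j b x).
Proof.
apply/funext => x.
have -> : logq T b th = (fun x => \sum_(k < dT) th 0 k * Tcomp T k x + b x
                              - ln (fine (qnorm T b th))).
  apply/funext => z; rewrite /logq /natpar; congr (_ + _ - _).
  by apply: eq_bigr => k _; rewrite mulrC.
rewrite partial_lin //; [by move=> k; case: (dTk k)|by case: db].
Qed.

Lemma d2logq (th : 'rV[R]_dT) (j : 'I_dX) (x : 'rV[R]_dX) :
  partial j (partial j (logq T b th)) x =
  \sum_(k < dT) th 0 k * partial j (partial j (Tcomp T k)) x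
  + partial j (partial j b) x.
Proof.
rewrite dlogq.
have -> : (fun x => \sum_(k < dT) th 0 k * partial j (Tcomp T k) x + partial j b x)
  = (fun x => \sum_(k < dT) th 0 k * partial j (Tcomp T k) x + partial j b x - 0).
  by apply/funext => z; rewrite subr0.
rewrite partial_lin //; [by move=> k; case: (dTk k)|by case: db].
Qed.

Lemma nsm_Fq (th : 'rV[R]_dT) (y : 'rV[R]_dX) :
  nsm_term w T b th y =
  Fq (w y ^+ 2) (fun j k => partial j (Tcomp T k) y) (fun j => partial j b y)
     (fun j => partial j (fun x => w x ^+ 2) y)
     (fun j k => partial j (partial j (Tcomp T k)) y)
     (fun j => partial j (partial j b) y) (fun k => th 0 k).
Proof.
rewrite /nsm_term /=; rewrite /Fq /grad_norm /laplacian sqr_sqrtr; last first.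
  by apply: sumr_ge0 => j _; exact: sqr_ge0.
congr (_ * _ + 2 * _ + _ * _).
- by apply: eq_bigr => j _; rewrite dlogq.
- by apply: eq_bigr => j _; rewrite dlogq.
- by apply: eq_bigr => j _; rewrite d2logq.
Qed.

End S.

End Sec_H4.

Section Sec_H5.
Set Implicit Arguments.
Unset Strict Implicit.
Local Open Scope ring_scope.

Lemma term_le_sum (R : realType) n (F : 'I_n -> R) i :
  (forall k, 0 <= F k) -> F i <= \sum_(k < n) F k.
Proof.
move=> F0; rewrite (bigD1 i) //= lerDl; apply: sumr_ge0 => k _; exact: F0.
Qed.

Lemma abs_le_sqrt (R : realType) (x S : R) : x ^+ 2 <= S -> `|x| <= Num.sqrt S.
Proof.
by move=> h; rewrite -sqrtr_sqr; apply: ler_wsqrtr.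
Qed.

Lemma sqr_sum_le (R : realType) n (x : 'I_n -> R) :
  (\sum_(i < n) x i) ^+ 2 <= n%:R * \sum_(i < n) x i ^+ 2.
Proof.
elim: n x => [|n IH] x; first by rewrite !big_ord0 expr0n /= mul0r.
rewrite !big_ord_recr /=.
set S := \sum_(i < n) x (widen_ord (leqnSn n) i).
set Q := \sum_(i < n) x (widen_ord (leqnSn n) i) ^+ 2.
set y := x ord_max.
have h : S ^+ 2 <= n%:R * Q by exact: IH.
have Q0 : 0 <= Q by apply: sumr_ge0 => i _; exact: sqr_ge0.
have n0 : 0 <= n%:R :> R by [].
rewrite -natr1.
have h2 : 0 <= (S - n%:R * y) ^+ 2 by exact: sqr_ge0.
have h3 : 0 <= (n%:R * Q - S ^+ 2) by lra.
have key : 0 <= n%:R * (Q + n%:R * y ^+ 2 - 2 * S * y) by nra.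
case: (posnP n) => [n0'|np].
  rewrite n0' /= mul0r in h; have S0 : S = 0 by nra.
  rewrite n0' S0 /=; nra.
have np' : 0 < n%:R :> R by rewrite ltr0n.
have : 0 <= Q + n%:R * y ^+ 2 - 2 * S * y.
  by rewrite -(pmulr_rge0 _ np').
nra.
Qed.

Lemma lin_le_quad (R : realType) (a e x : R) : 0 <= a -> 0 < e ->
  a * `|x| <= e * x ^+ 2 + a ^+ 2 / e.
Proof.
move=> a0 e0.
have h : 0 <= e * (`|x| - a / e / 2) ^+ 2 by rewrite mulr_ge0 ?sqr_ge0 ?ltW.
have hx : `|x| ^+ 2 = x ^+ 2 by rewrite real_normK ?num_real.
have ha : 0 <= a ^+ 2 / e by rewrite divr_ge0 ?sqr_ge0 ?ltW.
have e0' : e != 0 by rewrite gt_eqF.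
have : e * (`|x| - a / e / 2) ^+ 2 = e * x ^+ 2 - a * `|x| + a ^+ 2 / e / 4.
  rewrite -hx; field; done.
lra.
Qed.

End Sec_H5.

Section Sec_H6.
Set Implicit Arguments.
Unset Strict Implicit.
Local Open Scope ring_scope.

Lemma sq_bound (R : realType) (X c w : R) : 0 <= X -> 0 < w ->
  Num.sqrt X <= c / w -> w ^+ 2 * X <= c ^+ 2.
Proof.
move=> X0 w0 h.
have a0 : 0 <= Num.sqrt X by exact: sqrtr_ge0.
have hX : X = Num.sqrt X ^+ 2 by rewrite sqr_sqrtr.
have hc : c = (c / w) * w by rewrite divfK // gt_eqF.
rewrite hX hc; set a := Num.sqrt X; set bb := c / w.
have : a * a <= bb * bb by exact: ler_pM.
nra.
Qed.

Section B.
Variables (R : realType) (dX dT : nat) (w : 'rV[R]_dX -> R)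
  (T : 'rV[R]_dX -> 'rV[R]_dT) (b : 'rV[R]_dX -> R) (C C' : R).
Hypothesis w0 : forall x, 0 <= w x.
Hypothesis A5a : forall x, 0 < w x ->
        Num.max (Num.max (Num.sqrt (frob_gradT T x * grad_norm b x))
                         (Num.sqrt (frob_hessT T x)))
                (frob_gradT T x)
        <= C / w x.
Hypothesis A5b : forall x, 0 < grad_norm (fun y => w y ^+ 2) x ->
        frob_gradT T x <= C' / grad_norm (fun y => w y ^+ 2) x.

Lemma D_le y j k : `|partial j (Tcomp T k) y| <= frob_gradT T y.
Proof.
rewrite /frob_gradT; apply: abs_le_sqrt.
have h1 := term_le_sum (F:=fun l => partial l (Tcomp T k) y ^+ 2) j (fun _ => sqr_ge0 _).
have h2 := term_le_sum (F:=fun k => \sum_(l < dX) partial l (Tcomp T k) y ^+ 2) k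
   (fun k' => sumr_ge0 _ (fun l _ => sqr_ge0 _)).
exact: le_trans h1 h2.
Qed.

Lemma Db_le y j : `|partial j b y| <= grad_norm b y.
Proof.
apply: abs_le_sqrt.
exact: (term_le_sum (F:=fun l => partial l b y ^+ 2) j (fun _ => sqr_ge0 _)).
Qed.

Lemma p_le y j : `|partial j (fun x => w x ^+ 2) y| <= grad_norm (fun x => w x ^+ 2) y.
Proof.
apply: abs_le_sqrt.
exact: (term_le_sum (F:=fun l => partial l (fun x => w x ^+ 2) y ^+ 2) j (fun _ => sqr_ge0 _)).
Qed.

Lemma H_le y j k : `|partial j (partial j (Tcomp T k)) y| <= frob_hessT T y.
Proof.
rewrite /frob_hessT; apply: abs_le_sqrt.
have h1 := term_le_sum (F:=fun m => partial m (partial j (Tcomp T k)) y ^+ 2) j (fun _ => sqr_ge0 _).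
have h2 := term_le_sum (F:=fun l => \sum_(m < dX) partial m (partial l (Tcomp T k)) y ^+ 2) j
   (fun l => sumr_ge0 _ (fun m _ => sqr_ge0 _)).
have h3 := term_le_sum (F:=fun k => \sum_(l < dX) \sum_(m < dX)
              partial m (partial l (Tcomp T k)) y ^+ 2) k
   (fun k' => sumr_ge0 _ (fun l _ => sumr_ge0 _ (fun m _ => sqr_ge0 _))).
exact: le_trans (le_trans h1 h2) h3.
Qed.

Lemma frob_ge0 y : 0 <= frob_gradT T y. Proof. exact: sqrtr_ge0. Qed.
Lemma gb_ge0 y : 0 <= grad_norm b y. Proof. exact: sqrtr_ge0. Qed.
Lemma hess_ge0 y : 0 <= frob_hessT T y. Proof. exact: sqrtr_ge0. Qed.
Lemma gw_ge0 y : 0 <= grad_norm (fun x => w x ^+ 2) y. Proof. exact: sqrtr_ge0. Qed.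

Lemma bFG y : 0 < w y -> w y ^+ 2 * (frob_gradT T y * grad_norm b y) <= C ^+ 2.
Proof.
move=> wp; apply: sq_bound => //; first by rewrite mulr_ge0 ?frob_ge0 ?gb_ge0.
by apply: le_trans (A5a wp); rewrite !le_max lexx.
Qed.

Lemma bH y : 0 < w y -> w y ^+ 2 * frob_hessT T y <= C ^+ 2.
Proof.
move=> wp; apply: sq_bound => //; first exact: hess_ge0.
by apply: le_trans (A5a wp); rewrite !le_max lexx orbT.
Qed.

Lemma bF y : 0 < w y -> w y ^+ 2 * frob_gradT T y ^+ 2 <= C ^+ 2.
Proof.
move=> wp; apply: sq_bound => //; first exact: sqr_ge0.
rewrite sqrtr_sqr ger0_norm ?frob_ge0 //.
by apply: le_trans (A5a wp); rewrite !le_max lexx !orbT.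
Qed.

Lemma bP y : grad_norm (fun x => w x ^+ 2) y * frob_gradT T y <= `|C'|.
Proof.
have := gw_ge0 y; rewrite le_eqVlt => /orP [/eqP <-|gp].
  by rewrite mul0r.
have h := A5b gp.
have : grad_norm (fun x => w x ^+ 2) y * frob_gradT T y <= C'.
  by rewrite mulrC -ler_pdivlMr.
move=> h'; apply: le_trans h' _; exact: ler_norm.
Qed.

Lemma coef_bound y j k :
  `|2 * w y ^+ 2 * partial j b y * partial j (Tcomp T k) y
    + 2 * partial j (fun x => w x ^+ 2) y * partial j (Tcomp T k) y
    + 2 * w y ^+ 2 * partial j (partial j (Tcomp T k)) y|
  <= 4 * C ^+ 2 + 2 * `|C'|.
Proof.
have hD := D_le y j k; have hDb := Db_le y j; have hP := p_le y j; have hH := H_le y j k.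
set W := w y ^+ 2.
set D := partial j (Tcomp T k) y in hD *; set Db := partial j b y in hDb *.
set P := partial j (fun x => w x ^+ 2) y in hP *.
set H := partial j (partial j (Tcomp T k)) y in hH *.
have W0 : 0 <= W by exact: sqr_ge0.
have WE : W = w y ^+ 2 by [].
clearbody W D Db P H.
have e1 : `|2 * W * Db * D| <= 2 * C ^+ 2.
  rewrite !normrM ger0_norm // ger0_norm //.
  move: (w0 y); rewrite le_eqVlt => /orP [/eqP w00|wp].
    have W00 : W = 0 by rewrite WE -w00 expr2 mul0r.
    by rewrite W00 mulr0 !mul0r mulr_ge0 ?sqr_ge0.
  have h1 : `|Db| * `|D| <= grad_norm b y * frob_gradT T y.
    exact: ler_pM (normr_ge0 _) (normr_ge0 _) hDb hD.
  have h2 := ler_wpM2l W0 h1.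
  have := bFG wp; rewrite -WE mulrCA.
  have : 2 * W * `|Db| * `|D| = 2 * (W * (`|Db| * `|D|)) by ring.
  lra.
have e2 : `|2 * P * D| <= 2 * `|C'|.
  rewrite !normrM ger0_norm //.
  have h1 : `|P| * `|D| <= grad_norm (fun x => w x ^+ 2) y * frob_gradT T y.
    exact: ler_pM (normr_ge0 _) (normr_ge0 _) hP hD.
  have := bP y.
  have : 2 * `|P| * `|D| = 2 * (`|P| * `|D|) by ring.
  lra.
have e3 : `|2 * W * H| <= 2 * C ^+ 2.
  rewrite !normrM ger0_norm // ger0_norm //.
  move: (w0 y); rewrite le_eqVlt => /orP [/eqP w00|wp].
    have W00 : W = 0 by rewrite WE -w00 expr2 mul0r.
    by rewrite W00 mulr0 !mul0r mulr_ge0 ?sqr_ge0.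
  have h2 := ler_wpM2l W0 hH.
  have := bH wp; rewrite -WE.
  have : 2 * W * `|H| = 2 * (W * `|H|) by ring.
  lra.
apply: le_trans (ler_normD _ _) _.
apply: le_trans (lerD (ler_normD _ _) (lexx _)) _.
lra.
Qed.

Lemma quad_bound y (th : 'rV[R]_dT) :
  w y ^+ 2 * (\sum_(j < dX) (\sum_(k < dT) th 0 k * partial j (Tcomp T k) y) ^+ 2)
  <= dX%:R * dT%:R * C ^+ 2 * \sum_(k < dT) th 0 k ^+ 2.
Proof.
set N := \sum_(k < dT) th 0 k ^+ 2.
have N0 : 0 <= N by apply: sumr_ge0 => k _; exact: sqr_ge0.
move: (w0 y); rewrite le_eqVlt => /orP [/eqP w00|wp].
  rewrite -w00 expr0n /= mul0r; apply: mulr_ge0 => //.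
  apply: mulr_ge0; [exact: mulr_ge0|exact: sqr_ge0].
set F := frob_gradT T y.
have hL : forall j, (\sum_(k < dT) th 0 k * partial j (Tcomp T k) y) ^+ 2
                   <= dT%:R * F ^+ 2 * N.
  move=> j.
  have h1 : `|\sum_(k < dT) th 0 k * partial j (Tcomp T k) y|
            <= F * \sum_(k < dT) `|th 0 k|.
    apply: le_trans (ler_norm_sum _ _ _) _; rewrite mulr_sumr.
    apply: ler_sum => k _; rewrite normrM mulrC.
    by apply: ler_wpM2r => //; exact: D_le.
  have h2 := sqr_sum_le (fun k => `|th 0 k|).
  have h3 : \sum_(k < dT) `|th 0 k| ^+ 2 = N.
    by apply: eq_bigr => k _; rewrite real_normK ?num_real.
  rewrite h3 in h2.
  have s0 : 0 <= \sum_(k < dT) `|th 0 k| by apply: sumr_ge0 => k _.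
  have F0 : 0 <= F := frob_ge0 y.
  set Lj := \sum_(k < dT) _ in h1 *.
  set s := \sum_(k < dT) `|th 0 k| in h2 s0 h1 *.
  have hsq := ler_pM (normr_ge0 Lj) (normr_ge0 Lj) h1 h1.
  have e : Lj ^+ 2 = `|Lj| * `|Lj| by rewrite -expr2 real_normK ?num_real.
  have Fs : 0 <= F ^+ 2 by exact: sqr_ge0.
  have : F ^+ 2 * s ^+ 2 <= F ^+ 2 * (dT%:R * N) by rewrite ler_wpM2l.
  rewrite e; nra.
have : \sum_(j < dX) (\sum_(k < dT) th 0 k * partial j (Tcomp T k) y) ^+ 2
       <= dX%:R * (dT%:R * F ^+ 2 * N).
  have -> : dX%:R * (dT%:R * F ^+ 2 * N) = \sum_(j < dX) (dT%:R * F ^+ 2 * N).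
    by rewrite sumr_const card_ord mulr_natl.
  by apply: ler_sum => j _; exact: hL.
have := bF wp; rewrite -/F.
have d0 : 0 <= dX%:R :> R by []. have d1 : 0 <= dT%:R :> R by [].
have W0 : 0 <= w y ^+ 2 by exact: sqr_ge0.
move=> hb hs.
set S := \sum_(j < dX) _ in hs *.
have : w y ^+ 2 * S <= w y ^+ 2 * (dX%:R * (dT%:R * F ^+ 2 * N)) by rewrite ler_wpM2l.
have : w y ^+ 2 * (dX%:R * (dT%:R * F ^+ 2 * N)) = dX%:R * dT%:R * N * (w y ^+ 2 * F ^+ 2) by ring.
have : 0 <= dX%:R * dT%:R * N :> R by rewrite !mulr_ge0.
nra.
Qed.

End B.

End Sec_H6.

Section Sec_H7.
Set Implicit Arguments.
Unset Strict Implicit.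
Local Open Scope ring_scope.

Definition Nrm (R : realType) d (th : 'rV[R]_d) : R := \sum_(k < d) th 0 k ^+ 2.

Lemma Nrm_ge0 (R : realType) d (th : 'rV[R]_d) : 0 <= Nrm th.
Proof. by apply: sumr_ge0 => k _; exact: sqr_ge0. Qed.

Lemma abs_sum_le (R : realType) d (th : 'rV[R]_d) (a e : R) : 0 <= a -> 0 < e ->
  a * \sum_(k < d) `|th 0 k| <= e * Nrm th + d%:R * (a ^+ 2 / e).
Proof.
move=> a0 e0; rewrite /Nrm mulr_sumr mulr_sumr.
have -> : d%:R * (a ^+ 2 / e) = \sum_(k < d) (a ^+ 2 / e).
  by rewrite sumr_const card_ord mulr_natl.
rewrite -big_split /=.
by apply: ler_sum => k _; apply: lin_le_quad.
Qed.

Section C.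
Variables (R : realType) (dX dT : nat) (w : 'rV[R]_dX -> R)
  (T : 'rV[R]_dX -> 'rV[R]_dT) (b : 'rV[R]_dX -> R) (C C' : R).
Hypothesis w0 : forall x, 0 <= w x.
Hypothesis A5a : forall x, 0 < w x ->
        Num.max (Num.max (Num.sqrt (frob_gradT T x * grad_norm b x))
                         (Num.sqrt (frob_hessT T x)))
                (frob_gradT T x)
        <= C / w x.
Hypothesis A5b : forall x, 0 < grad_norm (fun y => w y ^+ 2) x ->
        frob_gradT T x <= C' / grad_norm (fun y => w y ^+ 2) x.
Hypothesis dTk : forall k, twice_diff (Tcomp T k).
Hypothesis db : twice_diff b.

Let Kc := 4 * C ^+ 2 + 2 * `|C'|.
Let KQ := dX%:R * dT%:R * C ^+ 2.
Definition Ke (e : R) := dT%:R * ((dX%:R * (4 * C ^+ 2 + 2 * `|C'|)) ^+ 2 / e).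

Lemma s_decomp (th : 'rV[R]_dT) y : exists Q Lin,
  nsm_term w T b th y - nsm_term w T b 0 y = Q + Lin /\
  0 <= Q /\ Q <= KQ * Nrm th /\ `|Lin| <= dX%:R * Kc * \sum_(k < dT) `|th 0 k|.
Proof.
rewrite !nsm_Fq //.
have -> : (fun k => (0 : 'rV[R]_dT) 0 k) = (fun _ => 0).
  by apply/funext => k; rewrite mxE.
rewrite Fq_diff.
eexists; eexists; split; first reflexivity.
split; first by rewrite mulr_ge0 ?sqr_ge0 // sumr_ge0 // => j _; exact: sqr_ge0.
split; first exact: (quad_bound w0 A5a).
apply: le_trans (ler_norm_sum _ _ _) _.
have -> : dX%:R * Kc * \sum_(k < dT) `|th 0 k| =
   \sum_(j < dX) (Kc * \sum_(k < dT) `|th 0 k|).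
  by rewrite sumr_const card_ord -mulr_natl; ring.
apply: ler_sum => j _; rewrite mulr_sumr.
apply: le_trans (ler_norm_sum _ _ _) _.
apply: ler_sum => k _; rewrite normrM mulrC.
apply: ler_wpM2r => //; exact: (coef_bound w0 A5a A5b).
Qed.

Lemma s_low (th : 'rV[R]_dT) y e : 0 < e ->
  - (e * Nrm th + Ke e) <= nsm_term w T b th y - nsm_term w T b 0 y.
Proof.
move=> e0; have [Q [Lin [-> [Q0 [QK LK]]]]] := s_decomp th y.
have Kc0 : 0 <= Kc by rewrite /Kc addr_ge0 // mulr_ge0 // sqr_ge0.
have := abs_sum_le th (mulr_ge0 (ler0n _ dX) Kc0) e0.
rewrite /Ke -/Kc.
have := ler_normr Lin; have := ler_norml Lin.
move: LK; set A := _ * _ * \sum_(k < dT) _.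
move=> LK.
have : - Lin <= A by apply: le_trans LK; rewrite -normrN ler_norm.
lra.
Qed.

Lemma s_up (th : 'rV[R]_dT) y e : 0 < e ->
  nsm_term w T b th y - nsm_term w T b 0 y <= (KQ + e) * Nrm th + Ke e.
Proof.
move=> e0; have [Q [Lin [-> [Q0 [QK LK]]]]] := s_decomp th y.
have Kc0 : 0 <= Kc by rewrite /Kc addr_ge0 // mulr_ge0 // sqr_ge0.
have := abs_sum_le th (mulr_ge0 (ler0n _ dX) Kc0) e0.
rewrite /Ke -/Kc.
have : Lin <= `|Lin| := ler_norm Lin.
lra.
Qed.

End C.

End Sec_H7.

Section Sec_H8.
Set Implicit Arguments.
Unset Strict Implicit.
Local Open Scope ring_scope.
Local Open Scope classical_set_scope.

Definition qf (R : realType) d (M : 'M[R]_d) (v : 'rV[R]_d) : R := (v *m M *m v^T) 0 0.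

Lemma qfE (R : realType) d (M : 'M[R]_d) (v : 'rV[R]_d) :
  qf M v = \sum_(j < d) \sum_(i < d) v 0 i * M i j * v 0 j.
Proof.
rewrite /qf mxE; apply: eq_bigr => j _; rewrite !mxE mulr_suml.
by [].
Qed.

Lemma cont_sum (R : realType) d n (F : 'I_n -> 'rV[R]_d -> R) :
  (forall i, continuous (F i)) -> continuous (fun v => \sum_(i < n) F i v).
Proof.
elim: n F => [|n IH] F cF.
  have -> : (fun v : 'rV[R]_d => \sum_(i < 0) F i v) = (fun=> 0).
    by apply/funext => v; rewrite big_ord0.
  exact: cst_continuous.
have -> : (fun v => \sum_(i < n.+1) F i v) =
   ((fun v => \sum_(i < n) F (widen_ord (leqnSn n) i) v) + F ord_max).
  by apply/funext => v; rewrite big_ord_recr.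
move=> x; apply: continuousD; last exact: cF.
exact: (IH (fun i => F (widen_ord (leqnSn n) i))).
Qed.

Lemma coordc (R : realType) d (i : 'I_d) : continuous (fun v : 'rV[R]_d => v 0 i).
Proof. exact: coord_continuous. Qed.

Lemma qf_cont (R : realType) d (M : 'M[R]_d) : continuous (qf M).
Proof.
have -> : qf M = (fun v => \sum_(j < d) \sum_(i < d) v 0 i * M i j * v 0 j).
  by apply/funext => v; rewrite qfE.
apply: cont_sum => j; apply: cont_sum => i.
have -> : (fun v : 'rV[R]_d => v 0 i * M i j * v 0 j) =
  ((fun v : 'rV[R]_d => v 0 i) \* (fun=> M i j)) \* (fun v : 'rV[R]_d => v 0 j) by [].
move=> x; apply: continuousM; last exact: coordc.
apply: continuousM; [exact: coordc|exact: cst_continuous].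
Qed.

Lemma Nrm_cont (R : realType) d : continuous (@Nrm R d).
Proof.
rewrite /Nrm; apply: cont_sum => i x.
have -> : (fun v : 'rV[R]_d => v 0 i ^+ 2) = (fun v => v 0 i) \* (fun v => v 0 i).
  by apply/funext => v /=; rewrite expr2.
by apply: continuousM; exact: coordc.
Qed.

Lemma NrmZ (R : realType) d (a : R) (v : 'rV[R]_d) : Nrm (a *: v) = a ^+ 2 * Nrm v.
Proof.
rewrite /Nrm mulr_sumr; apply: eq_bigr => i _; rewrite mxE; ring.
Qed.

Lemma qfZ (R : realType) d (M : 'M[R]_d) (a : R) (v : 'rV[R]_d) :
  qf M (a *: v) = a ^+ 2 * qf M v.
Proof.
rewrite !qfE mulr_sumr; apply: eq_bigr => j _; rewrite mulr_sumr.
apply: eq_bigr => i _; rewrite !mxE; ring.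
Qed.

Lemma Nrm_eq0 (R : realType) d (v : 'rV[R]_d) : Nrm v = 0 -> v = 0.
Proof.
move=> /eqP; rewrite /Nrm psumr_eq0; last by move=> i _; exact: sqr_ge0.
move=> /allP h; apply/rowP => i; rewrite mxE.
have := h i (mem_index_enum i); rewrite /= sqrf_eq0 => /eqP //.
Qed.

Lemma Nrm0 (R : realType) d : Nrm (0 : 'rV[R]_d) = 0.
Proof. by rewrite /Nrm big1 // => i _; rewrite mxE expr0n. Qed.

Lemma pd_lb (R : realType) d (M : 'M[R]_d) :
  (forall v : 'rV[R]_d, v != 0 -> 0 < qf M v) ->
  exists2 lam, 0 < lam & forall v, lam * Nrm v <= qf M v.
Proof.
move=> pd.
case: d M pd => [|d] M pd.
  exists 1 => // v; rewrite /Nrm qfE !big_ord0 mulr0 //.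
pose A := [set v : 'rV[R]_d.+1 | Nrm v = 1].
pose B := [set v : 'rV[R]_d.+1 | forall i, `[-1, 1]%classic (v ord0 i)].
have cB : compact B.
  exact: (@rV_compact R d.+1 (fun=> `[-1, 1]%classic) (fun=> @segment_compact R (-1) 1)).
have clA : closed A.
  have -> : A = (@Nrm R d.+1) @^-1` [set x | x = 1] by [].
  by apply: preimage_closed; [move=> x _; exact: Nrm_cont|exact: closed_eq].
have AB : (A `<=` B)%classic.
  move=> v /= Nv i; rewrite /= in_itv /= -ler_norml.
  have : v ord0 i ^+ 2 <= 1.
    rewrite -Nv /Nrm; rewrite (bigD1 i) //= lerDl.
    by apply: sumr_ge0 => k _; exact: sqr_ge0.
  move=> h; rewrite -(ler_pXn2r (n := 2)) //= ?nnegrE //.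
  by rewrite expr1n real_normK ?num_real.
have cA : compact A := subclosed_compact clA cB AB.
have A0 : (A !=set0)%classic.
  exists (delta_mx 0 ord0); rewrite /A /= /Nrm (bigD1 ord0) //= mxE eqxx /= expr1n.
  rewrite big1 ?addr0 // => i /negbTE ne; rewrite mxE ne andbF expr0n //.
have [c cA' cmin] := EVT_min_rV A0 cA (continuous_subspaceT (@qf_cont R d.+1 M)).
have Nc : Nrm c = 1 by move: cA'; rewrite inE.
have c0 : c != 0 by apply/eqP => c0; move: Nc; rewrite c0 Nrm0 => /eqP; rewrite eq_sym oner_eq0.
have lam0 := pd c c0.
exists (qf M c) => // v.
have [->|v0] := eqVneq v 0; first by rewrite Nrm0 mulr0 /qf mul0mx mul0mx mxE.
have Np : 0 < Nrm v.
  rewrite lt_def Nrm_ge0 andbT; apply/eqP => /Nrm_eq0 h; by rewrite h eqxx in v0.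
set r := Num.sqrt (Nrm v).
have r0 : 0 < r by rewrite sqrtr_gt0.
have rr : r ^+ 2 = Nrm v by rewrite sqr_sqrtr // ltW.
have uA : (r^-1 *: v) \in A.
  rewrite inE /A /= NrmZ exprVn rr mulVf //; exact: lt0r_neq0.
have := cmin _ uA; rewrite qfZ exprVn rr => h.
by rewrite -ler_pdivlMr // mulrC.
Qed.

End Sec_H8.

Section Sec_H9.
Set Implicit Arguments.
Unset Strict Implicit.
Local Open Scope ring_scope.

Lemma inv_pd (R : realType) d (S : 'M[R]_d) : posdef S ->
  forall v : 'rV[R]_d, v != 0 -> 0 < qf (invmx S) v.
Proof.
move=> [St pS] v v0.
have [Su|Snu] := boolP (S \in unitmx); last first.
  by rewrite invmx_out ?inE //; exact: pS.
set M := invmx S.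
set z := v *m M.
have vz : z *m S = v by rewrite /z /M mulmxKV.
have z0 : z != 0.
  by apply: contraNneq v0 => ez; rewrite -vz ez mul0mx.
have MT : M^T = M by rewrite /M trmx_inv St.
have := pS z z0.
have -> : z *m S *m z^T = v *m M *m v^T.
  by rewrite vz /z trmx_mul MT mulmxA.
done.
Qed.

Lemma sq_le_Nrm (R : realType) d (u : 'rV[R]_d) i : u 0 i ^+ 2 <= Nrm u.
Proof. exact: (term_le_sum (F := fun k => u 0 k ^+ 2) i (fun _ => sqr_ge0 _)). Qed.

Lemma qf_ub (R : realType) d (M : 'M[R]_d) (u : 'rV[R]_d) :
  qf M u <= (\sum_(j < d) \sum_(i < d) `|M i j|) * Nrm u.
Proof.
rewrite qfE mulr_suml; apply: ler_sum => j _; rewrite mulr_suml.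
apply: ler_sum => i _.
apply: le_trans (ler_norm _) _.
rewrite !normrM.
have hi := sq_le_Nrm u i; have hj := sq_le_Nrm u j.
have h : `|u 0 i| * `|u 0 j| <= Nrm u.
  have := sqr_ge0 (`|u 0 i| - `|u 0 j|).
  rewrite -(real_normK (num_real (u 0 i))) in hi.
  rewrite -(real_normK (num_real (u 0 j))) in hj.
  nra.
have m0 := normr_ge0 (M i j).
have : `|M i j| * (`|u 0 i| * `|u 0 j|) <= `|M i j| * Nrm u by rewrite ler_wpM2l.
have : `|u 0 i| * `|M i j| * `|u 0 j| = `|M i j| * (`|u 0 i| * `|u 0 j|) by ring.
lra.
Qed.

Lemma Nrm_sub_le (R : realType) d (a b : 'rV[R]_d) : Nrm (a - b) <= 2 * Nrm a + 2 * Nrm b.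
Proof.
rewrite /Nrm !mulr_sumr -big_split /=; apply: ler_sum => k _; rewrite !mxE.
have := sqr_ge0 (a 0 k + b 0 k); nra.
Qed.

Lemma Nrm_le_sub (R : realType) d (a b : 'rV[R]_d) : Nrm a <= 2 * Nrm (a - b) + 2 * Nrm b.
Proof.
rewrite /Nrm !mulr_sumr -big_split /=; apply: ler_sum => k _; rewrite !mxE.
have := sqr_ge0 (a 0 k - b 0 k - b 0 k); nra.
Qed.

End Sec_H9.

Section Sec_H10.
Set Implicit Arguments.
Unset Strict Implicit.
Local Open Scope ring_scope.

Lemma iint_gauss (R : realType) d (r : R) : 0 < r ->
  exists2 P : R, 0 < P & forall c, 0 <= c ->
    iint (fun th : 'rV[R]_d => (c * expR (- (r * Nrm th)))%:E) = (c * P)%:E.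
Proof.
move=> r0.
set s := Num.sqrt ((2 * r)^-1).
have s0 : 0 < s by rewrite sqrtr_gt0 invr_gt0 mulr_gt0.
have sn0 : s != 0 by rewrite gt_eqF.
have ss : s ^+ 2 *+ 2 = r^-1.
  rewrite sqr_sqrtr ?invr_ge0 ?mulr_ge0 ?ltW // -mulr_natl.
  have r0' : r != 0 by rewrite gt_eqF.
  by field.
set pk := normal_peak s.
have pk0 : 0 < pk by exact: normal_peak_gt0.
have phiE : forall t : R, normal_pdf 0 s t = pk * expR (- (r * t ^+ 2)).
  move=> t; rewrite normal_pdfE //= /normal_fun subr0 ss invrK.
  by rewrite mulNr (mulrC (t ^+ 2)).
exists (pk ^- d); first by rewrite invr_gt0 exprn_gt0.
move=> c c0.
have -> : (fun th : 'rV[R]_d => (c * expR (- (r * Nrm th)))%:E) =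
   (fun th : 'rV[R]_d => ((c * pk ^- d) * \prod_(k < d) normal_pdf 0 s (th 0 k))%:E).
  apply/funext => th; congr (_%:E).
  have -> : \prod_(k < d) normal_pdf 0 s (th 0 k) =
     \prod_(k < d) (pk * expR (- (r * th 0 k ^+ 2))).
    by apply: eq_bigr => k _; rewrite phiE.
  rewrite big_split /= prodr_const card_ord -expR_sum.
  rewrite /Nrm mulr_sumr -sumrN.
  rewrite -mulrA [pk ^- d * _]mulrA mulVf ?mul1r //.
  by rewrite expf_neq0 // gt_eqF.
rewrite (iint_prod _ _ (normal_pdf 0 s) (c * pk ^- d)) //.
- by move=> t; exact: normal_pdf_ge0.
- exact: measurable_normal_pdf.
- exact: integral_normal_pdf.
- by rewrite mulr_ge0 // invr_ge0 exprn_ge0 // ltW.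
Qed.

End Sec_H10.

Section Sec_H11.
Set Implicit Arguments.
Unset Strict Implicit.
Local Open Scope ring_scope.

Lemma ub_arith (R : realType) (c0 beta lam X Y Q N Nd Nm K nn e : R) :
  0 <= c0 -> 0 <= beta -> 0 <= lam -> beta * nn * e = lam / 8 ->
  - (nn * (e * N + K)) <= X - Y -> lam * Nd <= Q -> N <= 2 * Nd + 2 * Nm ->
  expR (- (beta * X)) * (c0 * expR (- (2^-1 * Q))) <=
  expR (- (beta * Y)) * (c0 * expR (beta * nn * K + lam / 2 * Nm)) *
     expR (- (lam / 8 * N)).
Proof.
move=> c00 b0 l0 be hX hQ hN.
have -> : expR (- (beta * X)) * (c0 * expR (- (2^-1 * Q))) =
   c0 * expR (- (beta * X) - 2^-1 * Q) by rewrite expRD; ring.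
have -> : expR (- (beta * Y)) * (c0 * expR (beta * nn * K + lam / 2 * Nm)) *
     expR (- (lam / 8 * N)) =
   c0 * expR (- (beta * Y) + (beta * nn * K + lam / 2 * Nm) - lam / 8 * N).
  by rewrite !expRD; ring.
apply: ler_wpM2l => //.
rewrite ler_expR.
have h1 : beta * (X - Y) >= - (lam / 8 * N + beta * nn * K).
  have := ler_wpM2l b0 hX.
  have -> : beta * - (nn * (e * N + K)) = - (beta * nn * e * N + beta * nn * K) by ring.
  by rewrite be.
have h3 : lam * Nd >= lam * (N / 2 - Nm) by rewrite ler_wpM2l //; lra.
lra.
Qed.

Lemma lb_arith (R : realType) (c0 beta mS nn KQ X Y Q N Nd Nm K1 : R) :
  0 <= c0 -> 0 <= beta -> 0 <= mS -> 0 <= nn -> 0 <= KQ -> 0 <= N -> 0 <= Nd ->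
  X - Y <= nn * ((KQ + 1) * N + K1) -> Q <= mS * Nd -> Nd <= 2 * N + 2 * Nm ->
  expR (- (beta * Y)) * (c0 * expR (- (beta * nn * K1 + mS * Nm))) *
     expR (- ((beta * nn * (KQ + 1) + mS + 1) * N)) <=
  expR (- (beta * X)) * (c0 * expR (- (2^-1 * Q))).
Proof.
move=> c00 b0 m0 n0 k0 N0 Nd0 hX hQ hN.
have -> : expR (- (beta * X)) * (c0 * expR (- (2^-1 * Q))) =
   c0 * expR (- (beta * X) - 2^-1 * Q) by rewrite expRD; ring.
have -> : expR (- (beta * Y)) * (c0 * expR (- (beta * nn * K1 + mS * Nm))) *
     expR (- ((beta * nn * (KQ + 1) + mS + 1) * N)) =
   c0 * expR (- (beta * Y) - (beta * nn * K1 + mS * Nm)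
      - ((beta * nn * (KQ + 1) + mS + 1) * N)).
  by rewrite !expRD; ring.
apply: ler_wpM2l => //.
rewrite ler_expR.
have h1 : beta * (X - Y) <= beta * (nn * ((KQ + 1) * N + K1)) by rewrite ler_wpM2l.
have h4 : mS * Nd <= mS * (2 * N + 2 * Nm) by rewrite ler_wpM2l.
lra.
Qed.

Section Main.
Variables (R : realType) (dX dT n : nat) (beta : R)
  (xo : 'I_n -> 'rV[R]_dX) (mu : 'rV[R]_dT) (Sigma : 'M[R]_dT)
  (w : 'rV[R]_dX -> R) (T : 'rV[R]_dX -> 'rV[R]_dT) (b : 'rV[R]_dX -> R)
  (j : 'I_n) (C C' : R).
Hypothesis beta0 : 0 < beta.
Hypothesis pdS : posdef Sigma.
Hypothesis w0 : forall x, 0 <= w x.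
Hypothesis A5a : forall x, 0 < w x ->
        Num.max (Num.max (Num.sqrt (frob_gradT T x * grad_norm b x))
                         (Num.sqrt (frob_hessT T x)))
                (frob_gradT T x)
        <= C / w x.
Hypothesis A5b : forall x, 0 < grad_norm (fun y => w y ^+ 2) x ->
        frob_gradT T x <= C' / grad_norm (fun y => w y ^+ 2) x.
Hypothesis dTk : forall k, twice_diff (Tcomp T k).
Hypothesis db : twice_diff b.

Definition ttm (y : 'rV[R]_dX) (th : 'rV[R]_dT) := nsm_term w T b th y.
Definition kap (y : 'rV[R]_dX) := nsm_term w T b 0 y.
Definition MM := invmx Sigma.
Definition c0 := (Num.sqrt ((2 * pi) ^+ dT * \det Sigma))^-1.
Definition pu (ys : 'I_n -> 'rV[R]_dX) th := post_unnorm beta mu Sigma w T b ys th.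
Definition Xs (ys : 'I_n -> 'rV[R]_dX) th := \sum_(i < n) ttm (ys i) th.
Definition Ys (ys : 'I_n -> 'rV[R]_dX) := \sum_(i < n) kap (ys i).

Lemma c0_ge0 : 0 <= c0.
Proof. by rewrite invr_ge0 sqrtr_ge0. Qed.

Lemma n_gt0 : (0 < n)%N.
Proof. exact: leq_ltn_trans (leq0n j) (ltn_ord j). Qed.

Lemma pu_eq ys th : pu ys th =
  expR (- (beta * Xs ys th)) * (c0 * expR (- (2^-1 * qf MM (th - mu)))).
Proof.
rewrite /pu /post_unnorm /L_NSM /gauss_pdf /Xs /qf /MM /c0 mulNr.
have hn : (n%:R : R) != 0 by rewrite pnatr_eq0 -lt0n n_gt0.
congr (expR (- _) * _); rewrite /ttm.
by field.
Qed.

Let KQ := dX%:R * dT%:R * C ^+ 2.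
Let Ke1 := Ke dX dT C C' 1.

Lemma sum_low ys th e : 0 < e ->
  Xs ys th - Ys ys >= - (n%:R * (e * Nrm th + Ke dX dT C C' e)).
Proof.
move=> e0; rewrite /Xs /Ys -sumrB.
have -> : - (n%:R * (e * Nrm th + Ke dX dT C C' e)) =
    \sum_(i < n) - (e * Nrm th + Ke dX dT C C' e).
  by rewrite sumr_const card_ord mulNrn mulr_natl.
by apply: ler_sum => i _; exact: (s_low w0 A5a A5b dTk db).
Qed.

Lemma sum_up ys th :
  Xs ys th - Ys ys <= n%:R * ((KQ + 1) * Nrm th + Ke1).
Proof.
rewrite /Xs /Ys -sumrB.
have -> : n%:R * ((KQ + 1) * Nrm th + Ke1) = \sum_(i < n) ((KQ + 1) * Nrm th + Ke1).
  by rewrite sumr_const card_ord mulr_natl.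
by apply: ler_sum => i _; exact: (s_up w0 A5a A5b dTk db _ _ ltr01).
Qed.

Lemma u_ub : exists2 r, 0 < r & exists A, 0 <= A /\ forall ys th,
  pu ys th <= expR (- (beta * Ys ys)) * A * expR (- (r * Nrm th)).
Proof.
have [lam lam0 hlam] := pd_lb (inv_pd pdS).
have np : 0 < n%:R :> R by rewrite ltr0n n_gt0.
pose e := lam / (8 * (beta * n%:R)).
have e0 : 0 < e by rewrite divr_gt0 // mulr_gt0 // mulr_gt0.
have be : beta * n%:R * e = lam / 8.
  rewrite /e; field; apply/andP; split; rewrite gt_eqF //.
exists (lam / 8); first by rewrite divr_gt0.
exists (c0 * expR (beta * n%:R * Ke dX dT C C' e + lam / 2 * Nrm mu)).
split; first by rewrite mulr_ge0 ?c0_ge0 ?expR_ge0.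
move=> ys th; rewrite pu_eq.
apply: (ub_arith c0_ge0 (ltW beta0) (ltW lam0) be (sum_low ys th e0) (hlam (th - mu))
   (Nrm_le_sub th mu)).
Qed.

Lemma u_lb : exists2 r, 0 < r & exists2 B, 0 <= B & (0 < c0 -> 0 < B) /\ forall ys th,
  expR (- (beta * Ys ys)) * B * expR (- (r * Nrm th)) <= pu ys th.
Proof.
pose mS := \sum_(j < dT) \sum_(i < dT) `|MM i j|.
have mS0 : 0 <= mS by apply: sumr_ge0 => a _; apply: sumr_ge0 => c _.
have np : 0 <= n%:R :> R by [].
have KQ0 : 0 <= KQ by apply: mulr_ge0; [apply: mulr_ge0|exact: sqr_ge0].
pose r := beta * n%:R * (KQ + 1) + mS + 1.
have r0 : 0 < r.
  have h : 0 <= beta * n%:R * (KQ + 1).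
    by apply: mulr_ge0; [apply: mulr_ge0 => //; exact: ltW | exact: addr_ge0].
  rewrite /r; lra.
exists r => //.
exists (c0 * expR (- (beta * n%:R * Ke1 + mS * Nrm mu))).
  by rewrite mulr_ge0 ?c0_ge0 ?expR_ge0.
split; first by move=> cp; rewrite mulr_gt0 ?expR_gt0.
move=> ys th; rewrite pu_eq.
apply: (lb_arith c0_ge0 (ltW beta0) mS0 np KQ0 (Nrm_ge0 th) (Nrm_ge0 (th - mu))
  (sum_up ys th) (qf_ub MM (th - mu)) (Nrm_sub_le th mu)).
Qed.


Lemma Z_bd r A r' B P P' :
  (forall ys th, pu ys th <= expR (- (beta * Ys ys)) * A * expR (- (r * Nrm th))) ->
  (forall ys th, expR (- (beta * Ys ys)) * B * expR (- (r' * Nrm th)) <= pu ys th) ->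
  (forall c, 0 <= c -> iint (fun th : 'rV[R]_dT => (c * expR (- (r * Nrm th)))%:E) = (c * P)%:E) ->
  (forall c, 0 <= c -> iint (fun th : 'rV[R]_dT => (c * expR (- (r' * Nrm th)))%:E) = (c * P')%:E) ->
  0 <= A -> 0 <= B -> forall ys, exists Zr,
  iint (fun th => (pu ys th)%:E) = Zr%:E /\
  expR (- (beta * Ys ys)) * B * P' <= Zr /\ Zr <= expR (- (beta * Ys ys)) * A * P.
Proof.
move=> hub hlb hP hP' A0 B0 ys.
have up : (iint (fun th => (pu ys th)%:E) <= (expR (- (beta * Ys ys)) * A * P)%:E)%E.
  rewrite -hP; last by rewrite mulr_ge0 ?expR_ge0.
  by apply: iint_le => th; rewrite lee_fin.
have lo : ((expR (- (beta * Ys ys)) * B * P')%:E <= iint (fun th => (pu ys th)%:E))%E.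
  rewrite -hP'; last by rewrite mulr_ge0 ?expR_ge0.
  by apply: iint_le => th; rewrite lee_fin.
move: up lo; case: (iint _) => [z| |] up lo.
- by exists z; split => //; rewrite -!lee_fin.
- by move: up; rewrite leye_eq.
- by move: lo; rewrite leeNy_eq.
Qed.

Lemma ln_pu ys th : 0 < c0 ->
  ln (pu ys th) = - (beta * Xs ys th) + ln c0 - 2^-1 * qf MM (th - mu).
Proof.
move=> cp; rewrite pu_eq.
have e1 := expR_gt0 (- (beta * Xs ys th)).
have e2 := expR_gt0 (- (2^-1 * qf MM (th - mu))).
have e3 : 0 < c0 * expR (- (2^-1 * qf MM (th - mu))) by rewrite mulr_gt0.
rewrite (lnM (x := expR _) (y := c0 * _)) ?posrE //.
rewrite (lnM (x := c0)) ?posrE //.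
by rewrite !expRK; ring.
Qed.

Lemma sum_replace (F : 'rV[R]_dX -> R) xc :
  \sum_(i < n) F (replace_at xo j xc i) - \sum_(i < n) F (xo i) = F xc - F (xo j).
Proof.
rewrite (bigD1 j) //= [X in _ - X](bigD1 j) //= /replace_at eqxx.
have -> : \sum_(i < n | i != j) F (if i == j then xc else xo i) =
          \sum_(i < n | i != j) F (xo i).
  by apply: eq_bigr => i /negbTE ->.
ring.
Qed.

Lemma final_arith (p L K1 K2 N r P0 : R) :
  0 <= p -> p <= P0 * expR (- (r * N)) -> L <= K1 * N + K2 -> 0 <= K1 ->
  0 <= N -> 0 < r -> 0 <= P0 ->
  p * L <= P0 * (2 * K1 / r + `|K2|) * expR (- (r / 2 * N)).
Proof.
move=> p0 hp hL K10 N0 r0 P00.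
set E := expR (- (r / 2 * N)).
have E0 : 0 < E by exact: expR_gt0.
have E2 : expR (- (r * N)) = E * E by rewrite /E -expRD; congr expR; field.
have E1 : E <= 1 by rewrite /E -expR0 ler_expR oppr_le0 mulr_ge0 // divr_ge0 // ltW.
have hEN : r / 2 * N * E <= 1.
  have h := expR_ge1Dx (r / 2 * N).
  have hh : expR (r / 2 * N) * E = 1 by rewrite /E -expRD subrr expR0.
  have : r / 2 * N <= expR (r / 2 * N) by lra.
  move=> h'; have := ler_wpM2r (ltW E0) h'; rewrite hh //.
have hNE : N * E <= 2 / r.
  rewrite ler_pdivlMr //.
  have -> : N * E * r = 2 * (r / 2 * N * E) by field.
  lra.
have K2a := ler_norm K2.
have K2n := normr_ge0 K2.
have s1 : p * L <= p * (K1 * N + `|K2|) by rewrite ler_wpM2l //; lra.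
have s2 : p * (K1 * N + `|K2|) <= P0 * (E * E) * (K1 * N + `|K2|).
  rewrite -E2; apply: ler_wpM2r => //; rewrite addr_ge0 // mulr_ge0 //.
have s3 : E * E * (K1 * N + `|K2|) <= (2 * K1 / r + `|K2|) * E.
  have : E * E * (K1 * N + `|K2|) = E * (K1 * (N * E)) + `|K2| * (E * E) by ring.
  move=> ->.
  have a1 : K1 * (N * E) <= K1 * (2 / r) by rewrite ler_wpM2l.
  have a2 : E * E <= E by rewrite -[X in _ <= X]mulr1 ler_wpM2l // ltW.
  have a3 : E * (K1 * (N * E)) <= E * (K1 * (2 / r)) by rewrite ler_wpM2l // ltW.
  have a4 : `|K2| * (E * E) <= `|K2| * E by rewrite ler_wpM2l.
  have : E * (K1 * (2 / r)) = 2 * K1 / r * E by ring.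
  lra.
have s4 : P0 * (E * E * (K1 * N + `|K2|)) <= P0 * ((2 * K1 / r + `|K2|) * E).
  by rewrite ler_wpM2l.
move: s1 s2 s4; rewrite !mulrA; lra.
Qed.

End Main.

End Sec_H11.

Section Sec_H12.
Set Implicit Arguments.
Unset Strict Implicit.
Local Open Scope ring_scope.

Lemma ln_le_expM (R : realType) (Z a c : R) : 0 < Z -> 0 < c -> Z <= expR a * c ->
  ln Z <= a + ln c.
Proof.
move=> Z0 c0 h.
have e0 : 0 < expR a * c by rewrite mulr_gt0 // expR_gt0.
have : ln Z <= ln (expR a * c) by rewrite ler_ln ?posrE.
by rewrite lnM ?posrE ?expR_gt0 // expRK.
Qed.

Lemma ln_ge_expM (R : realType) (Z a c : R) : 0 < c -> expR a * c <= Z ->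
  a + ln c <= ln Z.
Proof.
move=> c0 h.
have e0 : 0 < expR a * c by rewrite mulr_gt0 // expR_gt0.
have Z0 : 0 < Z by exact: lt_le_trans h.
have : ln (expR a * c) <= ln Z by rewrite ler_ln ?posrE.
by rewrite lnM ?posrE ?expR_gt0 // expRK.
Qed.

Lemma log_arith (R : realType) (beta po pc Zo Zc Xo Xc Yo Yc L0 Lq tc to kc ko AP BP N KQ Ke1 : R) :
  0 < beta -> 0 < po -> 0 < pc -> 0 < Zo -> 0 < Zc ->
  ln po = - (beta * Xo) + L0 - Lq -> ln pc = - (beta * Xc) + L0 - Lq ->
  Xc - Xo = tc - to -> Yc - Yo = kc - ko ->
  ln Zc <= - (beta * Yc) + AP -> - (beta * Yo) + BP <= ln Zo ->
  tc - kc <= (KQ + 1) * N + Ke1 -> - (1 * N + Ke1) <= to - ko ->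
  ln (po / Zo / (pc / Zc)) <= beta * (KQ + 2) * N + (2 * beta * Ke1 + AP - BP).
Proof.
move=> b0 po0 pc0 Zo0 Zc0 lo lc hX hY lZc lZo hup hlo.
rewrite ln_div ?posrE ?divr_gt0 // !ln_div ?posrE // lo lc.
have h1 : beta * (tc - kc) <= beta * ((KQ + 1) * N + Ke1) by rewrite ler_wpM2l // ltW.
have h2 : beta * (- (1 * N + Ke1)) <= beta * (to - ko) by rewrite ler_wpM2l // ltW.
have eX : beta * Xc - beta * Xo = beta * (tc - to) by rewrite -mulrBr hX.
have eY : beta * Yc - beta * Yo = beta * (kc - ko) by rewrite -mulrBr hY.
lra.
Qed.

Section Main2.
Variables (R : realType) (dX dT n : nat) (beta : R)
  (xo : 'I_n -> 'rV[R]_dX) (mu : 'rV[R]_dT) (Sigma : 'M[R]_dT)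
  (w : 'rV[R]_dX -> R) (T : 'rV[R]_dX -> 'rV[R]_dT) (b : 'rV[R]_dX -> R)
  (j : 'I_n) (C C' : R).
Hypothesis beta0 : 0 < beta.
Hypothesis pdS : posdef Sigma.
Hypothesis w0 : forall x, 0 <= w x.
Hypothesis A5a : forall x, 0 < w x ->
        Num.max (Num.max (Num.sqrt (frob_gradT T x * grad_norm b x))
                         (Num.sqrt (frob_hessT T x)))
                (frob_gradT T x)
        <= C / w x.
Hypothesis A5b : forall x, 0 < grad_norm (fun y => w y ^+ 2) x ->
        frob_gradT T x <= C' / grad_norm (fun y => w y ^+ 2) x.
Hypothesis dTk : forall k, twice_diff (Tcomp T k).
Hypothesis db : twice_diff b.

Local Notation pu := (pu beta mu Sigma w T b).
Local Notation Ys := (Ys w T b).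
Local Notation Xs := (Xs w T b).
Local Notation c0 := (c0 Sigma).

Lemma KL_bound : 0 < c0 -> exists K : R, forall xc,
  (KL (pi_NSM beta mu Sigma w T b xo)
      (pi_NSM beta mu Sigma w T b (replace_at xo j xc)) <= K%:E)%E.
Proof.
move=> c0p.
have [r r0 [A [A0 hub]]] := u_ub mu j beta0 pdS w0 A5a A5b dTk db.
have [r' r'0 [B B0 [Bp hlb]]] := u_lb mu Sigma j beta0 w0 A5a A5b dTk db.
have Bpos := Bp c0p.
have [P Ppos hP] := iint_gauss dT r0.
have [P' P'pos hP'] := iint_gauss dT r'0.
have r20 : 0 < r / 2 by rewrite divr_gt0.
have [P2 P2pos hP2] := iint_gauss dT r20.
have ZB := Z_bd hub hlb hP hP' A0 (ltW Bpos).
have [Zo [eZo [loZo upZo]]] := ZB xo.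
set Eo := expR (- (beta * Ys xo)) in loZo upZo.
have Eo0 : 0 < Eo by exact: expR_gt0.
have Zo0 : 0 < Zo by apply: lt_le_trans loZo; rewrite !mulr_gt0.
have AP0 : 0 < A * P.
  have : 0 < Eo * A * P by apply: lt_le_trans upZo.
  by rewrite -mulrA pmulr_rgt0.
have BP0 : 0 < B * P' by rewrite mulr_gt0.
pose KQ := dX%:R * dT%:R * C ^+ 2.
pose Ke1 := Ke dX dT C C' 1.
pose K1 := beta * (KQ + 2).
pose K2 := 2 * beta * Ke1 + ln (A * P) - ln (B * P').
pose P0 := Eo * A / Zo.
exists (P0 * (2 * K1 / r + `|K2|) * P2) => xc.
set yc := replace_at xo j xc.
have [Zc [eZc [loZc upZc]]] := ZB yc.
set Ec := expR (- (beta * Ys yc)) in loZc upZc.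
have Ec0 : 0 < Ec by exact: expR_gt0.
have Zc0 : 0 < Zc by apply: lt_le_trans loZc; rewrite !mulr_gt0.
have epo : pi_NSM beta mu Sigma w T b xo = (fun th => pu xo th / Zo).
  apply/funext => th; rewrite /pi_NSM; rewrite /pu in eZo; by rewrite eZo.
have epc : pi_NSM beta mu Sigma w T b yc = (fun th => pu yc th / Zc).
  apply/funext => th; rewrite /pi_NSM; rewrite /pu in eZc; by rewrite eZc.
rewrite /KL epo epc.
have K10 : 0 <= K1.
  rewrite /K1 /KQ; apply: mulr_ge0; first exact: ltW.
  apply: addr_ge0 => //; apply: mulr_ge0; [exact: mulr_ge0|exact: sqr_ge0].
have P00 : 0 <= P0.
  by apply: divr_ge0; [apply: mulr_ge0; [exact: (ltW Eo0)|exact: A0]|exact: (ltW Zo0)].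
have cK : 0 <= P0 * (2 * K1 / r + `|K2|).
  apply: mulr_ge0; first exact: P00.
  apply: addr_ge0; last exact: normr_ge0.
  apply: divr_ge0; last exact: (ltW r0).
  apply: mulr_ge0; [exact: ler0n|exact: K10].
rewrite -(hP2 _ cK).
apply: iint_le => th; rewrite lee_fin.
have pos : forall ys : 'I_n -> 'rV[R]_dX, 0 < pu ys th.
  move=> ys; apply: (lt_le_trans _ (hlb ys th)).
  apply: mulr_gt0; [apply: mulr_gt0; [exact: expR_gt0|exact: Bpos]|exact: expR_gt0].
have po := pos xo; have pc := pos yc.
apply: final_arith.
- exact: divr_ge0 (ltW po) (ltW Zo0).
- rewrite /P0 (mulrAC (Eo * A)) ler_pM2r; first exact: hub.
  by rewrite invr_gt0.
- have lZc : ln Zc <= - (beta * Ys yc) + ln (A * P).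
    by apply: ln_le_expM; [exact: Zc0|exact: AP0|rewrite mulrA].
  have lZo : - (beta * Ys xo) + ln (B * P') <= ln Zo.
    by apply: ln_ge_expM; [exact: BP0|rewrite mulrA].
  have hX := sum_replace xo j (fun y => ttm w T b y th) xc.
  have hY := sum_replace xo j (fun y => kap w T b y) xc.
  have hup := s_up w0 A5a A5b dTk db th xc ltr01.
  have hlo := s_low w0 A5a A5b dTk db th (xo j) ltr01.
  apply: (log_arith beta0 po pc Zo0 Zc0 (ln_pu beta mu w T b j xo th c0p)
     (ln_pu beta mu w T b j yc th c0p) hX hY lZc lZo hup hlo).
- exact: K10.
- exact: Nrm_ge0.
- exact: r0.
- exact: P00.
Qed.

End Main2.

End Sec_H12.

Local Open Scope ring_scope.

Theorem theorem4p6 (R : realType) (dX dT n : nat) (beta : R)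
  (xo : 'I_n -> 'rV[R]_dX) (mu : 'rV[R]_dT) (Sigma : 'M[R]_dT)
  (w : 'rV[R]_dX -> R) (T : 'rV[R]_dX -> 'rV[R]_dT) (b : 'rV[R]_dX -> R)
  (j : 'I_n) :
  0 < beta ->
  posdef Sigma ->
  (* (A1) *)
  (forall x, 0 <= w x) ->
  C2 w ->
  (exists M : R, forall x, w x <= M) ->
  (exists M : R, forall x, grad_norm w x <= M) ->
  (* (A3) *)
  (forall k, twice_diff (Tcomp T k)) ->
  twice_diff b ->
  (forall theta, (qnorm T b theta < +oo)%E) ->
  (* (A5) *)
  (exists C C' : R,
     (forall x, 0 < w x ->
        Num.max (Num.max (Num.sqrt (frob_gradT T x * grad_norm b x))
                         (Num.sqrt (frob_hessT T x)))
                (frob_gradT T x)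
        <= C / w x) /\
     (forall x, 0 < grad_norm (fun y => w y ^+ 2) x ->
        frob_gradT T x <= C' / grad_norm (fun y => w y ^+ 2) x)) ->
  (ereal_sup [set KL (pi_NSM beta mu Sigma w T b xo)
                     (pi_NSM beta mu Sigma w T b (replace_at xo j xc))
             | xc in [set: 'rV[R]_dX]] < +oo)%E.
Proof.
move=> beta0 pdS w0 _ _ _ dTk db _ [C [C' [A5a A5b]]].
have := c0_ge0 Sigma; rewrite le_eqVlt => /orP [/eqP c00|c0p].
  apply: (@le_lt_trans _ _ 0%E); last exact: ltry.
  apply: ge_ereal_sup => _ [xc _ <-].
  have z : forall ys : 'I_n -> 'rV[R]_dX, pi_NSM beta mu Sigma w T b ys = (fun _ : 'rV[R]_dT => 0 : R).
    move=> ys; apply/funext => th; rewrite /pi_NSM.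
    have := pu_eq beta mu Sigma w T b j ys th; rewrite /pu => ->.
    by rewrite -c00 mul0r mulr0 mul0r.
  rewrite /KL !z.
  have [P Ppos hP] := iint_gauss dT (@ltr01 R).
  have := hP 0 (lexx 0); rewrite mul0r => e0.
  apply: (@le_trans _ _ (0%R)%:E); last by [].
  rewrite -e0.
  by apply: iint_le => th; rewrite mul0r mul0r.
have [K hK] := KL_bound xo mu j beta0 pdS w0 A5a A5b dTk db c0p.
apply: (@le_lt_trans _ _ K%:E); last exact: ltry.
apply: ge_ereal_sup => _ [xc _ <-].
exact: hK.
Qed.
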